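(* ($q$-Seidel formula) Let $q\neq-1$ be real and $n\ge1$. Then $$\sum_{k=0}^{\lfloor n/2\rfloor}q^{\binom{2k}{2}}\begin{bmatrix} n\\ 2k\end{bmatrix}(-1)^k\frac{(-q^{n-2k+1};q)_{2k}}{(-q^{2n-2k};q)_{2k}}\,G_{2n-2k}(q)=[n=1].$$
   Context: Notation: $[m]=1+q+\cdots+q^{m-1}$, $[m]!=[1]\cdots[m]$, $\begin{bmatrix} m\\ j\end{bmatrix}=\frac{[m]!}{[j]![m-j]!}$; $(a;q)_m=(1-a)(1-aq)\cdots(1-aq^{m-1})$ (so $(-a;q)_m=(1+a)(1+aq)\cdots(1+aq^{m-1})$, and $(a;q)_0=1$); $[P]$ is $1$ if $P$ holds and $0$ otherwise. With $e(z)=\sum_{m\ge0}z^m/[m]!$, the $q$-Genocchi numbers $G_{2m}(q)$, $m\ge1$, are defined by the formal power series identity $z\frac{e(z)-e(-z)}{e(z)+e(-z)}=\sum_{m\ge1}\frac{(-1)^{m-1}G_{2m}(q)(-q;q)_{2m-1}}{[2m]!}z^{2m}$. *)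

(* Defs.v *)
From HB Require Import structures.
From mathcomp Require Import all_boot all_order all_algebra.
From mathcomp Require Import reals.
Set Implicit Arguments. Unset Strict Implicit. Unset Printing Implicit Defensive.
Import Order.TTheory GRing.Theory Num.Theory.
Local Open Scope ring_scope.

Section QDefs.
Variable R : realType.
Implicit Types (q a : R) (m j n : nat).

Definition qint q m : R := \sum_(i < m) q ^+ i.
Definition qfact q m : R := \prod_(i < m) qint q i.+1.
Definition qbinom q m j : R := qfact q m / (qfact q j * qfact q (m - j)).
Definition qpoch a q m : R := \prod_(i < m) (1 - a * q ^+ i).

(* Formal power series are coefficient sequences nat -> R.
   fps_div b a is the quotient series b/a (a has invertible constant term):
   its coefficients c satisfy c_n = (b_n - sum_{k<n} c_k a_{n-k}) / a_0. *)
Fixpoint fps_div_seq (b a : nat -> R) (n : nat) : seq R :=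
  match n with
  | 0 => [:: b 0%N / a 0%N]
  | n'.+1 => let s := fps_div_seq b a n' in
             rcons s ((b n - \sum_(k < n) s`_k * a (n - k)%N) / a 0%N)
  end.
Definition fps_div (b a : nat -> R) (n : nat) : R := (fps_div_seq b a n)`_n.

Definition qexp_coef q m : R := (qfact q m)^-1.
Definition qden_coef q m : R := qexp_coef q m + (-1) ^+ m * qexp_coef q m.
(* coefficients of z (e(z) - e(-z)) *)
Definition qnum_coef q m : R :=
  if m is m'.+1 then qexp_coef q m' - (-1) ^+ m' * qexp_coef q m' else 0.
(* coefficients of z (e(z)-e(-z))/(e(z)+e(-z)) *)
Definition qgen_series q : nat -> R := fps_div (qnum_coef q) (qden_coef q).

(* q-Genocchi number G_N(q), meaningful for N = 2m with m >= 1: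
   coefficient of z^(2m) is (-1)^(m-1) G_(2m)(q) (-q;q)_(2m-1) / [2m]!. *)
Definition qGenocchi q (N : nat) : R :=
  let m := N./2 in
  (-1) ^+ m.-1 * qgen_series q N * qfact q N / qpoch (- q) q (N.-1).
End QDefs.

(* Main.v *)
Require Import Defs.
From HB Require Import structures.
From mathcomp Require Import all_boot all_order all_algebra.
From mathcomp Require Import reals.
From Stdlib Require Import FunctionalExtensionality.
From mathcomp Require Import zify ring.
From Stdlib Require Import Lia.
Import Order.TTheory GRing.Theory Num.Theory.
Local Open Scope ring_scope.

Section S.
Variable R : realType.
Variable q : R.
Hypothesis hq : q != -1.

Lemma qintD a b : qint q (a + b) = qint q a + q ^+ a * qint q b.
Proof.
rewrite /qint big_split_ord /=; congr (_ + _).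
rewrite mulr_sumr; apply: eq_bigr => i _ /=; by rewrite exprD.
Qed.

Lemma qint0 : qint q 0 = 0.
Proof. by rewrite /qint big_ord0. Qed.

Lemma qint_neq0 m : (0 < m)%N -> qint q m != 0.
Proof.
move=> m0; have h : q ^+ m - 1 = (q - 1) * qint q m by rewrite subrX1.
have [->|q1] := eqVneq q 1.
  rewrite /qint (eq_bigr (fun => 1)); last by move=> i _; rewrite expr1n.
  by rewrite sumr_const card_ord pnatr_eq0 -lt0n.
apply/eqP => h0; move: h; rewrite h0 mulr0 => /eqP; rewrite subr_eq0 => /eqP hm.
have : `|q| ^+ m == 1 by rewrite -normrX hm normr1.
rewrite pexpr_eq1 // eqr_norml ler01 andbT => /orP[]/eqP hh.
  by move: q1; rewrite hh eqxx.
by move: hq; rewrite hh eqxx.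
Qed.

Lemma qfactS n : qfact q n.+1 = qfact q n * qint q n.+1.
Proof. by rewrite /qfact big_ord_recr. Qed.

Lemma qfact0 : qfact q 0 = 1.
Proof. by rewrite /qfact big_ord0. Qed.

Lemma qfact_neq0 n : qfact q n != 0.
Proof.
elim: n => [|n IH]; first by rewrite qfact0 oner_neq0.
by rewrite qfactS mulf_neq0 // qint_neq0.
Qed.

Lemma tri (F : nat -> nat -> R) A :
  \sum_(a < A.+1) \sum_(b < a.+1) F b (a - b)%N =
  \sum_(b < A.+1) \sum_(c < (A - b).+1) F b c.
Proof.
elim: A => [|A IH].
  by rewrite !big_ord_recl !big_ord0.
rewrite big_ord_recr /= IH.

rewrite [RHS]big_ord_recr /=.
rewrite [in RHS](eq_bigr (fun b : 'I_A.+1 => \sum_(c < (A - b).+1) F b c + F b (A.+1 - b)%N)); last first.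
  move=> i _; have hi : (A.+1 - i = (A - i).+1)%N by rewrite subSn // -ltnS.
  by rewrite hi big_ord_recr.
rewrite big_split /= -addrA; congr (_ + _).
by rewrite big_ord_recr /= subnn big_ord1.
Qed.

Definition conv (u v : nat -> R) n := \sum_(k < n.+1) u k * v (n - k)%N.

Lemma conv_comm u v n : conv u v n = conv v u n.
Proof.
rewrite /conv (reindex_inj rev_ord_inj); apply: eq_bigr => i _ /=.
rewrite subSS subKn; [by rewrite mulrC | by rewrite -ltnS].
Qed.

Lemma conv_assoc u v w n : conv (conv u v) w n = conv u (conv v w) n.
Proof.
rewrite /conv; pose G := (fun b c : nat => u b * (v c * w (n - b - c)%N)).
transitivity (\sum_(a < n.+1) \sum_(b < a.+1) G b (a - b)%N).
  apply: eq_bigr => a _; rewrite mulr_suml; apply: eq_bigr => b _ /=.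
  have hb := ltn_ord b; have ha := ltn_ord a.
  rewrite /G -mulrA; congr (_ * (_ * w _)); lia.
rewrite tri; apply: eq_bigr => b _; rewrite mulr_sumr; apply: eq_bigr => c _.
by [].
Qed.


Lemma bin2S j : 'C(j.+1, 2) = ('C(j, 2) + j)%N.
Proof. by rewrite binS bin1. Qed.

Lemma b_step j (y : R) : y ^+ j.+1 / qfact q j.+1 * qint q j.+1 = y * (y ^+ j / qfact q j).
Proof.
have h1 := qfact_neq0 j; have h2 := @qint_neq0 j.+1 (ltn0Sn j).
rewrite qfactS exprS; field; by rewrite h1 h2.
Qed.

Lemma a_step j (x : R) : q ^+ 'C(j.+1,2) * x ^+ j.+1 / qfact q j.+1 * qint q j.+1
   = q ^+ j * x * (q ^+ 'C(j,2) * x ^+ j / qfact q j).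
Proof.
have h1 := qfact_neq0 j; have h2 := @qint_neq0 j.+1 (ltn0Sn j).
rewrite qfactS exprS bin2S exprD; field; by rewrite h1 h2.
Qed.

Definition hsum (x y : R) n := \sum_(k < n.+1)
   (q ^+ 'C(k,2) * x ^+ k / qfact q k) * (y ^+ (n - k) / qfact q (n - k)).

Lemma hsumS x y n : hsum x y n.+1 * qint q n.+1 = (y + q ^+ n * x) * hsum x y n.
Proof.
rewrite /hsum mulr_suml.
rewrite (eq_bigr (fun k : 'I_n.+2 =>
   (q ^+ 'C(k,2) * x ^+ k / qfact q k) * (y ^+ (n.+1 - k) / qfact q (n.+1 - k)) * qint q (n.+1 - k)
 + (q ^+ 'C(k,2) * x ^+ k / qfact q k) * (y ^+ (n.+1 - k) / qfact q (n.+1 - k)) * (q ^+ (n.+1 - k) * qint q k))); last first.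
  move=> k _; have hk := ltn_ord k.
  have E : qint q n.+1 = qint q (n.+1 - k) + q ^+ (n.+1 - k) * qint q k.
    by rewrite -qintD; congr qint; lia.
  by rewrite E mulrDr.
rewrite big_split /= mulrDl; congr (_ + _).
  rewrite big_ord_recr /= subnn qint0 mulr0 addr0 mulr_sumr.
  apply: eq_bigr => k _; have hk := ltn_ord k.
  have -> : (n.+1 - k = (n - k).+1)%N by lia.
  by rewrite -mulrA b_step mulrCA.
rewrite big_ord_recl /= qint0 mulr0 mulr0 add0r mulr_sumr.
apply: eq_bigr => k _; have hk := ltn_ord k.
rewrite /bump /= add1n subSS.
have h1 := qfact_neq0 k; have h2 := @qint_neq0 k.+1 (ltn0Sn k).
have -> : (q ^+ n = q ^+ (n - k) * q ^+ k) by rewrite -exprD; congr (_ ^+ _); lia.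
rewrite qfactS bin2S !exprD exprS; field; by rewrite h1 h2 qfact_neq0.
Qed.

Lemma hsum_prod x y n : hsum x y n * qfact q n = \prod_(i < n) (y + q ^+ i * x).
Proof.
elim: n => [|n IH].
  by rewrite /hsum big_ord_recl big_ord0 /= qfact0 !expr0 mul1r !invr1 !mulr1 addr0 big_ord0.
by rewrite qfactS [qfact q n * _]mulrC mulrA hsumS -mulrA IH big_ord_recr /= mulrC.
Qed.

Lemma hsum_neg1 n : hsum (-1) 1 n = (n == 0%N)%:R.
Proof.
have h := hsum_prod (-1) 1 n.
case: n h => [|n] h.
  by rewrite /hsum big_ord_recl big_ord0 /= qfact0 !expr0 mul1r !invr1 !mulr1 addr0.
move: h; rewrite big_ord_recl /= expr0 mul1r subrr mul0r => /eqP.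
by rewrite mulf_eq0 (negbTE (qfact_neq0 _)) orbF => /eqP ->.
Qed.

Definition ser := nat -> nat -> R.
Lemma ser_ext (c d : ser) : (forall A B, c A B = d A B) -> c = d.
Proof. move=> h; do 2 apply: functional_extensionality => ?; exact: h. Qed.

Definition pm (c d : ser) : ser := fun A B =>
  \sum_(a < A.+1) \sum_(b < B.+1) c a b * d (A - a)%N (B - b)%N * q ^+ (b * (A - a)).

Lemma arith1 (A a1 a2 b1 b2 : nat) : (a1 + a2 <= A)%N ->
  (b2 * (A - a1 - a2) + b1 * (A - a1) = b1 * a2 + (b1 + b2) * (A - a1 - a2))%N.
Proof.
move=> h; set t := (A - a1 - a2)%N.
have ht : (A - a1 = a2 + t)%N by rewrite /t; lia.
rewrite ht; ring.
Qed.

Lemma pmA c d e : pm (pm c d) e = pm c (pm d e).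
Proof.
apply: ser_ext => A B.
pose H a1 a2 b1 b2 := c a1 b1 * d a2 b2 * e (A - a1 - a2)%N (B - b1 - b2)%N
   * q ^+ (b1 * a2 + (b1 + b2) * (A - a1 - a2)).
pose K a1 a2 := \sum_(b1 < B.+1) \sum_(b2 < (B - b1).+1) H a1 a2 b1 b2.
transitivity (\sum_(a < A.+1) \sum_(a1 < a.+1) K a1 (a - a1)%N).
  rewrite /pm; apply: eq_bigr => a _.
  rewrite (eq_bigr (fun b : 'I_B.+1 => \sum_(a1 < a.+1) \sum_(b1 < b.+1) H a1 (a - a1)%N b1 (b - b1)%N)); last first.
    move=> b _; rewrite mulr_suml mulr_suml; apply: eq_bigr => a1 _; rewrite mulr_suml mulr_suml; apply: eq_bigr => b1 _.
    have ha := ltn_ord a; have hb := ltn_ord b; have ha1 := ltn_ord a1; have hb1 := ltn_ord b1.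
    rewrite /H.
    have e1 : (A - a1 - (a - a1) = A - a)%N by lia.
    have e2 : (B - b1 - (b - b1) = B - b)%N by lia.
    have e3 : (b1 + (b - b1) = b)%N by lia.
    rewrite e1 e2 e3 exprD; ring.
  rewrite exchange_big /=; apply: eq_bigr => a1 _.
  pose F b1 b2 := H a1 (a - a1)%N b1 b2.
  exact: (tri F B).
rewrite tri /pm; apply: eq_bigr => a1 _.
rewrite (eq_bigr (fun b1 : 'I_B.+1 => \sum_(a2 < (A - a1).+1) \sum_(b2 < (B - b1).+1) H a1 a2 b1 b2)); last first.
  move=> b1 _; rewrite mulr_sumr mulr_suml; apply: eq_bigr => a2 _; rewrite mulr_sumr mulr_suml; apply: eq_bigr => b2 _.
  have ha1 := ltn_ord a1; have hb1 := ltn_ord b1; have ha2 := ltn_ord a2; have hb2 := ltn_ord b2.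
  rewrite /H.
  have e1 : (A - a1 - a2 = A - a1 - a2)%N by [].
  set t := (A - a1 - a2)%N.
  have ht : (A - a1 = a2 + t)%N by rewrite /t; lia.
  have hexp : (b2 * t + b1 * (A - a1) = b1 * a2 + (b1 + b2) * t)%N.
    by rewrite /t arith1 //; lia.
  rewrite -hexp exprD; ring.
rewrite exchange_big /=; apply: eq_bigr => a2 _; by [].
Qed.

Definition one : ser := fun A B => ((A == 0%N) && (B == 0%N))%:R.
Definition sadd (c d : ser) : ser := fun A B => c A B + d A B.
Definition X (u : nat -> R) : ser := fun A B => if B == 0%N then u A else 0.
Definition Y (u : nat -> R) : ser := fun A B => if A == 0%N then u B else 0.
Definition delta : nat -> R := fun n => (n == 0%N)%:R.

Lemma sum_single N (F : 'I_N.+1 -> R) j : (forall m, m != j -> F m = 0) ->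
  \sum_(m < N.+1) F m = F j.
Proof. move=> h; rewrite (bigD1 j) //= big1 ?addr0 //. Qed.

Lemma ne_ord0 N (m : 'I_N.+1) : m != ord0 -> (m : nat) != 0%N.
Proof. by apply: contra => /eqP h; apply/eqP; apply: val_inj. Qed.

Lemma ne_ordmax N (m : 'I_N.+1) : m != ord_max -> ((m : nat) < N)%N.
Proof.
move=> h; rewrite ltn_neqAle -ltnS ltn_ord andbT; apply: contra h => /eqP hm.
by apply/eqP; apply: val_inj.
Qed.

Lemma pmE c d A B : pm c d A B =
  \sum_(a < A.+1) \sum_(b < B.+1) c a b * d (A - a)%N (B - b)%N * q ^+ (b * (A - a)).
Proof. by []. Qed.

Lemma pm1c c : pm one c = c.
Proof.
apply: ser_ext => A B; rewrite pmE (@sum_single _ _ ord0); last first.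
  move=> m /ne_ord0 hm; apply: big1 => b _; by rewrite /one (negbTE hm) mul0r mul0r.
rewrite (@sum_single _ _ ord0); last first.
  move=> m /ne_ord0 hm; by rewrite /one (negbTE hm) andbF mul0r mul0r.
by rewrite /one /= mul1r !subn0 mul0n expr0 mulr1.
Qed.

Lemma pmc1 c : pm c one = c.
Proof.
apply: ser_ext => A B; rewrite pmE (@sum_single _ _ ord_max); last first.
  move=> m /ne_ordmax hm; apply: big1 => b _; rewrite /one.
  have -> : ((A - m)%N == 0%N) = false by rewrite subn_eq0 leqNgt hm.
  by rewrite mulr0 mul0r.
rewrite (@sum_single _ _ ord_max); last first.
  move=> m /ne_ordmax hm; rewrite /one.
  have -> : ((B - m)%N == 0%N) = false by rewrite subn_eq0 leqNgt hm.
  by rewrite andbF mulr0 mul0r.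
by rewrite /one /= !subnn /= mulr1 muln0 expr0 mulr1.
Qed.

Lemma pmDl c d e : pm (sadd c d) e = sadd (pm c e) (pm d e).
Proof.
apply: ser_ext => A B; rewrite pmE /sadd -big_split; apply: eq_bigr => a _.
rewrite -big_split; apply: eq_bigr => b _; by rewrite !mulrDl.
Qed.

Lemma pmDr c d e : pm c (sadd d e) = sadd (pm c d) (pm c e).
Proof.
apply: ser_ext => A B; rewrite pmE /sadd -big_split; apply: eq_bigr => a _.
rewrite -big_split; apply: eq_bigr => b _; by rewrite mulrDr mulrDl.
Qed.

Lemma pmcX c u A B : pm c (X u) A B = \sum_(a < A.+1) c a B * u (A - a)%N * q ^+ (B * (A - a)).
Proof.
rewrite pmE; apply: eq_bigr => a _; rewrite (@sum_single _ _ ord_max).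
  by rewrite /X /= subnn eqxx.
move=> m /ne_ordmax hm; rewrite /X.
have -> : ((B - m)%N == 0%N) = false by rewrite subn_eq0 leqNgt hm.
by rewrite mulr0 mul0r.
Qed.

Lemma pmcY c u A B : pm c (Y u) A B = \sum_(b < B.+1) c A b * u (B - b)%N.
Proof.
rewrite pmE (@sum_single _ _ ord_max).
  by apply: eq_bigr => b _; rewrite /Y /= subnn eqxx muln0 expr0 mulr1.
move=> m /ne_ordmax hm; apply: big1 => b _; rewrite /Y.
have -> : ((A - m)%N == 0%N) = false by rewrite subn_eq0 leqNgt hm.
by rewrite mulr0 mul0r.
Qed.

Lemma pmXX u v : pm (X u) (X v) = X (conv u v).
Proof.
apply: ser_ext => A B; rewrite pmcX /X /conv.
case: eqP => [->|_]; first by apply: eq_bigr => a _; rewrite mul0n expr0 mulr1.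
by apply: big1 => a _; rewrite mul0r mul0r.
Qed.

Lemma pmYY u v : pm (Y u) (Y v) = Y (conv u v).
Proof.
apply: ser_ext => A B; rewrite pmcY /Y /conv.
by case: eqP => _ //; apply: big1 => a _; rewrite mul0r.
Qed.

Lemma pmXY u v A B : pm (X u) (Y v) A B = u A * v B.
Proof.
rewrite pmcY (@sum_single _ _ ord0); first by rewrite /X /= ?eqxx ?subn0.
by move=> m /ne_ord0 hm; rewrite /X (negbTE hm) mul0r.
Qed.

Lemma pmYX u v A B : pm (Y u) (X v) A B = u B * v A * q ^+ (B * A).
Proof.
rewrite pmcX (@sum_single _ _ ord0); first by rewrite /Y /= ?eqxx ?subn0.
by move=> m /ne_ord0 hm; rewrite /Y (negbTE hm) mul0r mul0r.
Qed.

Definition d1 : nat -> R := fun n => (n == 1%N)%:R.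
Definition Zs : ser := sadd (X d1) (Y d1).
Fixpoint Zp n : ser := if n is n'.+1 then pm (Zp n') Zs else one.

Lemma sum_d1S A (F : 'I_A.+2 -> R) :
  \sum_(a < A.+2) F a * d1 (A.+1 - a)%N = F (Ordinal (leqW (ltnSn A))).
Proof.
rewrite (@sum_single _ _ (Ordinal (leqW (ltnSn A)))); first by rewrite /d1 /= subSnn eqxx mulr1.
move=> m hm; rewrite /d1.
have hm' : (m : nat) != A by apply: contra hm => /eqP h; apply/eqP; apply: val_inj.
have hm2 := ltn_ord m.
have -> : ((A.+1 - m)%N == 1%N) = false by apply/negbTE; move: hm'; lia.
by rewrite mulr0.
Qed.

Lemma pmZ c A B : pm c Zs A B =
  (if A is A'.+1 then q ^+ B * c A' B else 0) + (if B is B'.+1 then c A B' else 0).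
Proof.
rewrite /Zs pmDr /sadd pmcX pmcY; congr (_ + _).
  case: A => [|A].
    by rewrite big_ord1 /d1 /= mulr0 mul0r.
  rewrite (eq_bigr (fun a : 'I_A.+2 => (c a B * q ^+ (B * (A.+1 - a))) * d1 (A.+1 - a)%N)); last first.
    by move=> a _; rewrite mulrAC.
  by rewrite sum_d1S /= ?subSnn ?muln1 mulrC.
case: B => [|B].
  by rewrite big_ord1 /d1 /= mulr0.
by rewrite sum_d1S /= ?subSnn.
Qed.

Definition Zpf n A B : R := if (A + B == n)%N then qfact q n / (qfact q A * qfact q B) else 0.

Lemma Zp_eq n A B : Zp n A B = Zpf n A B.
Proof.
elim: n A B => [|n IH] A B.
  rewrite /= /one /Zpf; case: A => [|A]; case: B => [|B] //=.
  by rewrite qfact0 mulr1 divr1.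
rewrite [Zp n.+1]/= pmZ.
case: A => [|A]; case: B => [|B]; rewrite ?IH /Zpf.
- by rewrite addr0 /=.
- rewrite add0r !add0n eqSS; case: eqP => [->|] //.
  rewrite qfact0 !mul1r !divff //; exact: qfact_neq0.
- rewrite addr0 !addn0 eqSS expr0 mul1r; case: eqP => [->|] //.
  rewrite qfact0 !mulr1 !divff //; exact: qfact_neq0.
- have -> : ((A + B.+1)%N == n) = ((A.+1 + B.+1)%N == n.+1) by rewrite addSn eqSS.
  have -> : ((A.+1 + B)%N == n) = ((A.+1 + B.+1)%N == n.+1) by rewrite addnS eqSS.
  case: eqP => [hn|_]; last by rewrite mulr0 addr0.
  have hn' : n = (A + B).+1 by move: hn; lia.
  rewrite hn' !qfactS.
  have e1 : qint q (A + B).+2 = qint q B.+1 + q ^+ B.+1 * qint q A.+1.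
    by rewrite -qintD; congr qint; lia.
  rewrite e1.
  have h1 := qfact_neq0 A; have h2 := qfact_neq0 B; have h3 := qfact_neq0 (A + B).
  have h4 := @qint_neq0 A.+1 (ltn0Sn A); have h5 := @qint_neq0 B.+1 (ltn0Sn B).
  have h6 := @qint_neq0 (A + B).+1 (ltn0Sn _).
  rewrite exprS; field; by rewrite h1 h2 h4 h5.
Qed.

Lemma Zp0 n A B : (A + B != n)%N -> Zp n A B = 0.
Proof. by move=> h; rewrite Zp_eq /Zpf (negbTE h). Qed.

Lemma Zp_add m k : pm (Zp m) (Zp k) = Zp (m + k).
Proof.
elim: k => [|k IH]; first by rewrite addn0 /= pmc1.
by rewrite addnS /= -IH pmA.
Qed.

Definition S (u : nat -> R) : ser := fun A B => u (A + B)%N * Zp (A + B) A B.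

Lemma S_mul u v : pm (S u) (S v) = S (conv u v).
Proof.
apply: ser_ext => A B; rewrite /S /conv pmE mulr_suml.
set N := (A + B)%N.
rewrite (eq_bigr (fun m : 'I_N.+1 => \sum_(a < A.+1) \sum_(b < B.+1)
   u m * v (N - m)%N * (Zp m a b * Zp (N - m)%N (A - a)%N (B - b)%N * q ^+ (b * (A - a))))); last first.
  move=> m _; have hm := ltn_ord m.
  have -> : Zp N = pm (Zp m) (Zp (N - m)) by rewrite Zp_add subnKC // -ltnS.
  rewrite pmE mulr_sumr; apply: eq_bigr => a _; rewrite mulr_sumr; by apply: eq_bigr.
rewrite [RHS]exchange_big /=; apply: eq_bigr => a _.
rewrite [RHS]exchange_big /=; apply: eq_bigr => b _.
have ha := ltn_ord a; have hb := ltn_ord b.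
have hab : (a + b < N.+1)%N by rewrite /N; lia.
rewrite (@sum_single _ _ (Ordinal hab)) /=.
  have -> : (N - (a + b) = A - a + (B - b))%N by rewrite /N; lia.
  by rewrite !mulrA; congr (_ * _); rewrite -!mulrA; congr (_ * _); rewrite mulrCA.
move=> m hm; rewrite Zp0 ?mul0r ?mulr0 //.
apply: contra hm => /eqP h; apply/eqP; apply: val_inj => /=; by rewrite h.
Qed.

Definition ee : nat -> R := fun n => (qfact q n)^-1.
Definition EE : nat -> R := fun n => q ^+ 'C(n, 2) / qfact q n.
Definition nsg (u : nat -> R) : nat -> R := fun n => (-1) ^+ n * u n.
Definition fadd (u v : nat -> R) : nat -> R := fun n => u n + v n.

Lemma convC u v : conv u v = conv v u.
Proof. apply: functional_extensionality => n; exact: conv_comm. Qed.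
Lemma convA u v w : conv (conv u v) w = conv u (conv v w).
Proof. apply: functional_extensionality => n; exact: conv_assoc. Qed.
Lemma conv_delta u : conv u delta = u.
Proof.
apply: functional_extensionality => n; rewrite /conv big_ord_recr /= ?subnn /delta eqxx mulr1.
rewrite big1 ?add0r // => i _; have hi := ltn_ord i.
have -> : ((n - i)%N == 0%N) = false by apply/negbTE; rewrite subn_eq0 -ltnNge.
by rewrite mulr0.
Qed.

Lemma sign_split n k : (k <= n)%N -> (-1) ^+ (n - k) * (-1) ^+ k = (-1) ^+ n :> R.
Proof. by move=> h; rewrite -exprD subnK. Qed.

Lemma sign_sq k : (-1) ^+ k * (-1) ^+ k = 1 :> R.
Proof. by rewrite -exprMn mulrNN mulr1 expr1n. Qed.

Lemma nsg_conv u v : nsg (conv u v) = conv (nsg u) (nsg v).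
Proof.
apply: functional_extensionality => n; rewrite /nsg /conv mulr_sumr; apply: eq_bigr => k _.
have hk : (k <= n)%N by rewrite -ltnS. rewrite -(@sign_split _ _ hk).
ring.
Qed.

Lemma nsgK u : nsg (nsg u) = u.
Proof. apply: functional_extensionality => n; by rewrite /nsg mulrA sign_sq mul1r. Qed.

Lemma conv_nEE_ee : conv (nsg EE) ee = delta.
Proof.
apply: functional_extensionality => n; rewrite /delta -hsum_neg1 /hsum /conv.
apply: eq_bigr => k _; rewrite /nsg /EE /ee expr1n; ring.
Qed.

Lemma conv_nee_EE : conv (nsg ee) EE = delta.
Proof.
rewrite convC; apply: functional_extensionality => n.
have := congr1 (fun f => f n) conv_nEE_ee => /= <-.
case: n => [|n]; first by rewrite /conv !big_ord1 /nsg /= !expr0 !mul1r mulrC.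
rewrite /conv.
transitivity ((-1) ^+ n.+1 * \sum_(k < n.+2) nsg EE k * ee (n.+1 - k)%N).
  rewrite mulr_sumr; apply: eq_bigr => k _; have hk : (k <= n.+1)%N by rewrite -ltnS.
  rewrite /nsg -(@sign_split _ _ hk).
  rewrite [RHS](_ : _ = (-1) ^+ (n.+1 - k) * ((-1) ^+ k * (-1) ^+ k) * (EE k * ee (n.+1 - k)%N)); last by ring.
  rewrite sign_sq mulr1; ring.
suff -> : \sum_(k < n.+2) nsg EE k * ee (n.+1 - k)%N = 0 by rewrite mulr0.
have := congr1 (fun f => f n.+1) conv_nEE_ee; rewrite /conv /= => ->.
by rewrite /delta.
Qed.

Lemma S_delta : S delta = one.
Proof.
apply: ser_ext => A B; rewrite /S /delta /one.
case: A => [|A]; case: B => [|B]; rewrite /= ?addn0 ?addSn ?addnS ?mul0r //=.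
by rewrite /one /= mul1r.
Qed.

Lemma S_add u v : S (fadd u v) = sadd (S u) (S v).
Proof. apply: ser_ext => A B; by rewrite /S /fadd /sadd mulrDl. Qed.

Lemma X_delta : X delta = one.
Proof. apply: ser_ext => A B; rewrite /X /delta /one; by case: (B == 0%N); rewrite ?andbT ?andbF. Qed.

Lemma S_e : S ee = pm (X ee) (Y ee).
Proof.
apply: ser_ext => A B; rewrite pmXY /S /ee Zp_eq /Zpf eqxx.
have h1 := qfact_neq0 A; have h2 := qfact_neq0 B; have h3 := qfact_neq0 (A + B).
field; by rewrite h1 h2 h3.
Qed.

Lemma bin2D A B : 'C(A + B, 2) = ('C(A, 2) + 'C(B, 2) + A * B)%N.
Proof.
elim: B => [|B IH]; first by rewrite addn0 bin0n muln0 !addn0.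
by rewrite addnS !bin2S IH mulnS; ring.
Qed.

Lemma S_E : S EE = pm (Y EE) (X EE).
Proof.
apply: ser_ext => A B; rewrite pmYX /S /EE Zp_eq /Zpf eqxx bin2D !exprD.
have h1 := qfact_neq0 A; have h2 := qfact_neq0 B; have h3 := qfact_neq0 (A + B).
rewrite mulnC; field; by rewrite h1 h2 h3.
Qed.

Definition DD := conv ee EE.
Definition M := sadd (Y DD) (X (nsg DD)).
Definition Qs p := pm (pm (X EE) (S p)) (X ee).

Lemma MQ p : conv (fadd DD delta) p = delta -> pm M (Qs p) = one.
Proof.
move=> hp.
have hA : pm (X (nsg DD)) (X EE) = X (nsg EE).
  rewrite pmXX /DD nsg_conv [conv (nsg ee) _]convC convA conv_nee_EE; by rewrite conv_delta.
have hB : pm (Y DD) (X EE) = pm (X (nsg EE)) (S DD).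
  transitivity (pm (pm (pm (pm (X (nsg EE)) (X ee)) (Y ee)) (Y EE)) (X EE)).
    by rewrite pmXX conv_nEE_ee X_delta pm1c pmYY.
  by rewrite /DD -S_mul S_e S_E !pmA.
have hC : pm M (X EE) = pm (X (nsg EE)) (S (fadd DD delta)).
  by rewrite /M pmDl hA hB S_add S_delta pmDr pmc1.
rewrite /Qs -pmA -pmA hC (pmA (X (nsg EE))) S_mul hp S_delta pmc1 pmXX conv_nEE_ee.
exact: X_delta.
Qed.

Definition sg (c : ser) : ser := fun A B => (-1) ^+ (A + B) * c B A.

Lemma sg_pm c d : sg (pm c d) = pm (sg d) (sg c).
Proof.
apply: ser_ext => A B; rewrite /sg !pmE.
transitivity (\sum_(b < B.+1) \sum_(a < A.+1) (-1) ^+ (A + B) * (c b a * d (B - b)%N (A - a)%N * q ^+ (a * (B - b)))).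
  by rewrite mulr_sumr; apply: eq_bigr => b _; rewrite mulr_sumr.
rewrite exchange_big /=.
rewrite [RHS](reindex_inj rev_ord_inj); apply: eq_bigr => a _.
rewrite [RHS](reindex_inj rev_ord_inj); apply: eq_bigr => b _ /=.
have ha : (a <= A)%N by rewrite -ltnS. have hb : (b <= B)%N by rewrite -ltnS.
rewrite !subSS !subKn //.
have hs : (-1) ^+ (A + B) = (-1) ^+ (A - a + (B - b)) * (-1) ^+ (a + b) :> R.
  by rewrite -exprD; congr (_ ^+ _); lia.
rewrite hs [(a * _)%N]mulnC; ring.
Qed.

Lemma sg_sadd c d : sg (sadd c d) = sadd (sg c) (sg d).
Proof. apply: ser_ext => A B; by rewrite /sg /sadd mulrDr. Qed.

Lemma sg_one : sg one = one.
Proof. apply: ser_ext => A B; rewrite /sg /one; case: A => [|A]; case: B => [|B] //=; by rewrite ?mulr0 ?mul1r. Qed.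

Lemma sg_X u : sg (X u) = Y (nsg u).
Proof. apply: ser_ext => A B; rewrite /sg /X /Y /nsg; case: A => [|A] //=; by rewrite mulr0. Qed.

Lemma sg_Y u : sg (Y u) = X (nsg u).
Proof. apply: ser_ext => A B; rewrite /sg /X /Y /nsg; case: B => [|B] //=; by rewrite ?addn0 ?mulr0. Qed.

Lemma sadd_comm c d : sadd c d = sadd d c.
Proof. apply: ser_ext => A B; by rewrite /sadd addrC. Qed.

Lemma sg_M : sg M = M.
Proof. by rewrite /M sg_sadd sg_X sg_Y nsgK sadd_comm. Qed.

Lemma Q_sym p : pm M (Qs p) = one -> sg (Qs p) = Qs p.
Proof.
move=> h; have := congr1 sg h; rewrite sg_pm sg_M sg_one => h1.
by rewrite -[sg (Qs p)]pmc1 -h -pmA h1 pm1c.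
Qed.

Lemma pmXc u c A B : pm (X u) c A B = \sum_(a < A.+1) u a * c (A - a)%N B.
Proof.
rewrite pmE; apply: eq_bigr => a _; rewrite big_ord_recl /= subn0 mul0n expr0 mulr1.
rewrite big1 ?addr0 // => b _; by rewrite /X /= mul0r mul0r.
Qed.

Definition Wp (B s : nat) : R := \prod_(i < s) (q ^+ B + q ^+ i).

Lemma Qs_eq p A B : Qs p A B = \sum_(a < A.+1)
   p (a + B)%N * (qfact q (a + B) / (qfact q a * qfact q B)) * (Wp B (A - a) / qfact q (A - a)).
Proof.
rewrite /Qs pmcX.
pose F (a c : nat) := S p a B * (EE c * ee (A - a - c)%N * q ^+ (B * (A - a - c))).
transitivity (\sum_(a' < A.+1) \sum_(a < a'.+1) F a (a' - a)%N).
  apply: eq_bigr => a' _; rewrite pmXc mulr_suml mulr_suml.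
  rewrite (reindex_inj rev_ord_inj); apply: eq_bigr => a _ /=.
  have ha : (a <= a')%N by rewrite -ltnS.
  rewrite subSS subKn // /F.
  have -> : (A - a - (a' - a) = A - a')%N by have := ltn_ord a'; lia.
  ring.
rewrite tri; apply: eq_bigr => a _.
have ha : (a <= A)%N by rewrite -ltnS.
rewrite /F -mulr_sumr /S Zp_eq /Zpf eqxx; congr (_ * _).
have hW : Wp B (A - a) = hsum 1 (q ^+ B) (A - a) * qfact q (A - a).
  by rewrite hsum_prod /Wp; apply: eq_bigr => i _; rewrite mulr1.
rewrite hW mulfK ?qfact_neq0 // /hsum.
apply: eq_bigr => c _; rewrite /EE /ee expr1n mulr1 -exprM.
by rewrite [(B * _)%N]mulnC; ring.
Qed.

Lemma fps_seq_size (b a : nat -> R) n : size (fps_div_seq b a n) = n.+1.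
Proof. by elim: n => [|n IH] //=; rewrite size_rcons IH. Qed.

Lemma fps_seq_nth (b a : nat -> R) n k : (k <= n)%N -> (fps_div_seq b a n)`_k = fps_div b a k.
Proof.
elim: n k => [|n IH] k hk.
  by move: hk; rewrite leqn0 => /eqP ->.
rewrite leq_eqVlt in hk; case/orP: hk => [/eqP ->|hk] //.
rewrite /= nth_rcons fps_seq_size hk; exact: IH.
Qed.

Lemma fps_divS (b a : nat -> R) n : fps_div b a n.+1 =
  (b n.+1 - \sum_(k < n.+1) fps_div b a k * a (n.+1 - k)%N) / a 0%N.
Proof.
rewrite /fps_div /= nth_rcons fps_seq_size ltnn eqxx.
congr ((_ - _) / _); apply: eq_bigr => k _; by rewrite fps_seq_nth // -ltnS ltn_ord.
Qed.

Lemma fps_conv (b a : nat -> R) n : a 0%N != 0 -> conv (fps_div b a) a n = b n.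
Proof.
move=> ha; case: n => [|n].
  by rewrite /conv big_ord1 /fps_div /= subn0 mulfVK.
rewrite /conv big_ord_recr /= subnn fps_divS mulfVK //.
by rewrite -/(fps_div b a) addrC subrK.
Qed.

Definition TT := qgen_series q.
Definition two : R := 1 + 1.
Lemma two_neq0 : two != 0.
Proof. by rewrite /two gt_eqF // addr_gt0 // ltr01. Qed.

Lemma den_eq : qden_coef q = fadd ee (nsg ee).
Proof. by apply: functional_extensionality => m; rewrite /qden_coef /qexp_coef /fadd /nsg /ee. Qed.

Lemma den0 : qden_coef q 0%N = two.
Proof. by rewrite /qden_coef /qexp_coef qfact0 invr1 expr0 mul1r. Qed.

Lemma den_odd m : odd m -> qden_coef q m = 0.
Proof. by move=> hm; rewrite /qden_coef -signr_odd hm expr1 mulN1r subrr. Qed.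

Lemma num_odd m : odd m -> qnum_coef q m = 0.
Proof.
case: m => [//|m] hm; rewrite /qnum_coef -signr_odd.
have -> : odd m = false by apply/negbTE; move: hm; rewrite /=.
by rewrite expr0 mul1r subrr.
Qed.

Lemma num0 : qnum_coef q 0%N = 0.
Proof. by []. Qed.

Lemma TT0 : TT 0%N = 0.
Proof. by rewrite /TT /qgen_series /fps_div /= ?num0 mul0r. Qed.

Lemma TT_odd m : odd m -> TT m = 0.
Proof.
elim/ltn_ind: m => m IH hm.
case: m IH hm => [//|m] IH hm.
rewrite /TT /qgen_series fps_divS num_odd // add0r big1 ?oppr0 ?mul0r //.
move=> k _; have hk := ltn_ord k.
case hok: (odd k).
  by rewrite -/(qgen_series q) -/TT IH // mul0r.
rewrite den_odd ?mulr0 //.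
rewrite oddB; last exact: ltnW.
by rewrite hm hok.
Qed.

Lemma conv_faddl u v w : conv (fadd u v) w = fadd (conv u w) (conv v w).
Proof.
apply: functional_extensionality => n; rewrite /conv /fadd -big_split.
by apply: eq_bigr => k _; rewrite mulrDl.
Qed.

Lemma TT_conv : conv TT (qden_coef q) = qnum_coef q.
Proof.
apply: functional_extensionality => n; rewrite /TT /qgen_series fps_conv // den0; exact: two_neq0.
Qed.

Lemma num_EE n : conv (qnum_coef q) EE n.+1 = DD n - delta n.
Proof.
rewrite /conv big_ord_recl /= ?num0 mul0r add0r.
rewrite -(congr1 (fun f => f n) conv_nee_EE) /DD /conv -sumrB.
apply: eq_bigr => k _; rewrite /bump /= add1n subSS /nsg /qexp_coef /ee; ring.
Qed.

Definition pp n := (delta n - TT n.+1) / two.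

Lemma pp_prop : conv (fadd DD delta) pp = delta.
Proof.
have hF : fadd DD delta = conv (qden_coef q) EE.
  by rewrite den_eq conv_faddl conv_nee_EE.
apply: functional_extensionality => n.
have h1 : conv TT (fadd DD delta) n.+1 = DD n - delta n.
  by rewrite hF -convA TT_conv num_EE.
have h2 : conv TT (fadd DD delta) n.+1 = \sum_(k < n.+1) TT k.+1 * fadd DD delta (n - k)%N.
  by rewrite /conv big_ord_recl /= TT0 mul0r add0r; apply: eq_bigr => k _; rewrite /bump /= add1n subSS.
have h3 : conv delta (fadd DD delta) n = fadd DD delta n.
  by rewrite conv_comm (congr1 (fun f => f n) (conv_delta _)).
rewrite conv_comm /conv /pp.
transitivity ((conv delta (fadd DD delta) n - conv TT (fadd DD delta) n.+1) / two).
  rewrite h2 /conv -sumrB mulr_suml; apply: eq_bigr => k _; ring.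
rewrite h3 h1 /fadd.
have -> : DD n + delta n - (DD n - delta n) = delta n * two by rewrite /two; ring.
by rewrite mulfK // two_neq0.
Qed.

Lemma Q_anti m : Qs pp m m.+1 + Qs pp m.+1 m = 0.
Proof.
have hs := @Q_sym pp (@MQ pp pp_prop).
have := congr1 (fun f => f m.+1 m) hs; rewrite /sg /= => <-.
have ho : odd (m.+1 + m) by rewrite oddD /= addNb addbb.
by rewrite -signr_odd ho expr1 mulN1r addrN.
Qed.

Lemma onepq_neq0 j : 1 + q ^+ j != 0.
Proof.
case: j => [|j]; first by rewrite expr0 -/two two_neq0.
apply/eqP => h.
have hj : q ^+ j.+1 = -1 by apply/eqP; rewrite -addr_eq0 addrC h.
have : `|q| ^+ j.+1 == 1 by rewrite -normrX hj normrN normr1.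
rewrite pexpr_eq1 // eqr_norml ler01 andbT => /orP[]/eqP hh.
  by move: h; rewrite hh expr1n -/two => /eqP; rewrite (negbTE two_neq0).
by move: hq; rewrite hh eqxx.
Qed.

Lemma qpochN_neq0 a s : qpoch (- q ^+ a) q s != 0.
Proof.
rewrite /qpoch; apply/prodf_neq0 => i _.
by rewrite mulNr opprK -exprD onepq_neq0.
Qed.

Lemma sum_rev_nat s : (\sum_(i < s) (s - i.+1))%N = 'C(s, 2).
Proof.
rewrite -bin2_sum big_mkord (reindex_inj rev_ord_inj); apply: eq_bigr => i _ /=.
have hi := ltn_ord i; apply/eqP; rewrite eqn_leq; apply/andP; split; lia.
Qed.

Lemma Wp_alt B s : (s <= B.+1)%N ->
  Wp B s = q ^+ 'C(s, 2) * \prod_(i < s) (1 + q ^+ (B.+1 - s + i)).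
Proof.
move=> hs; rewrite /Wp (reindex_inj rev_ord_inj) /=.
rewrite (eq_bigr (fun i : 'I_s => q ^+ (s - i.+1) * (1 + q ^+ (B.+1 - s + i)))); last first.
  move=> i _; have hi := ltn_ord i.
  rewrite mulrDr mulr1 -exprD addrC; congr (_ + _); congr (_ ^+ _); lia.
by rewrite big_split /= prodrXr sum_rev_nat.
Qed.

Lemma Wp_shift m s : (s <= m.+1)%N ->
  (1 + q ^+ m.+1) * Wp m s = (1 + q ^+ (m.+1 - s)) * Wp m.+1 s.
Proof.
move=> hs; rewrite (@Wp_alt m s hs) (@Wp_alt m.+1 s); last exact: (leq_trans hs).
rewrite mulrCA [RHS]mulrCA; congr (_ * _).
transitivity (\prod_(i < s.+1) (1 + q ^+ (m.+1 - s + i))).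
  by rewrite big_ord_recr /= mulrC subnK.
rewrite big_ord_recl /= addn0; congr (_ * _); apply: eq_bigr => i _.
by rewrite /bump /= add1n; congr (1 + _ ^+ _); lia.
Qed.

Lemma W1 n s : (s <= n)%N -> q ^+ 'C(s, 2) * qpoch (- q ^+ (n - s + 1)) q s = Wp n s.
Proof.
move=> hs; rewrite Wp_alt; last exact: (leq_trans hs).
congr (_ * _); apply: eq_bigr => i _; rewrite mulNr opprK -exprD; congr (1 + _ ^+ _); lia.
Qed.

Lemma W2 m s : qpoch (- q ^+ m.+1) q s * qpoch (- q) q m = qpoch (- q) q (m + s).
Proof.
rewrite /qpoch big_split_ord /= mulrC; congr (_ * _); apply: eq_bigr => i _.
by rewrite !mulNr !opprK -!exprS -exprD addSn.
Qed.

Definition Yf n s := qfact q (2 * n - s) * Wp n s * pp (2 * n - 1 - s) / (qfact q s * qfact q (n - s)).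

Lemma qint_two m a : qint q (m + a).+2 =
  ((1 + q ^+ m.+1) * qint q a.+1 + qint q m.+1 * (1 + q ^+ a.+1)) / two.
Proof.
have h1 : qint q (m + a).+2 = qint q m.+1 + q ^+ m.+1 * qint q a.+1.
  by rewrite -qintD; congr qint; lia.
have h2 : qint q (m + a).+2 = qint q a.+1 + q ^+ a.+1 * qint q m.+1.
  by rewrite -qintD; congr qint; lia.
have h3 : qint q (m + a).+2 * two = (1 + q ^+ m.+1) * qint q a.+1 + qint q m.+1 * (1 + q ^+ a.+1).
  by rewrite /two mulrDr mulr1 {1}h1 h2; ring.
by rewrite -h3 mulfK // two_neq0.
Qed.

Lemma Yterm m a : (a <= m)%N ->
  Yf m.+1 (m - a) = (1 + q ^+ m.+1) * qfact q m.+1 / two *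
   (pp (a + m.+1) * (qfact q (a + m.+1) / (qfact q a * qfact q m.+1)) * (Wp m.+1 (m - a) / qfact q (m - a))
  + pp (a.+1 + m) * (qfact q (a.+1 + m) / (qfact q a.+1 * qfact q m)) * (Wp m (m - a) / qfact q (m - a))).
Proof.
move=> ha; rewrite /Yf subSS.
have e1 : (2 * m.+1 - (m - a) = (m + a).+2)%N by lia.
have e2 : (2 * m.+1 - 1 - (m - a) = (m + a).+1)%N by lia.
have e3 : (m.+1 - (m - a) = a.+1)%N by lia.
have e4 : (a + m.+1 = (m + a).+1)%N by lia.
have e5 : (a.+1 + m = (m + a).+1)%N by lia.
rewrite e1 e2 e3 e4 e5.
have hW := @Wp_shift m (m - a) (leq_trans (leq_subr a m) (leqnSn m)).
rewrite e3 in hW.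
have hWm : Wp m (m - a) = (1 + q ^+ a.+1) * Wp m.+1 (m - a) / (1 + q ^+ m.+1).
  by rewrite -hW; field; exact: onepq_neq0.
rewrite hWm qfactS qint_two !qfactS.
have n1 := qfact_neq0 (m - a); have n2 := qfact_neq0 a; have n3 := qfact_neq0 m.
have n4 := @qint_neq0 a.+1 (ltn0Sn _); have n5 := @qint_neq0 m.+1 (ltn0Sn _).
have n6 := onepq_neq0 m.+1; have n7 := two_neq0.
field; by rewrite n1 n2 n3 n4 n5 n6 n7.
Qed.

Lemma Yterm0 m : Yf m.+1 m.+1 = (1 + q ^+ m.+1) * qfact q m.+1 / two *
  (pp (0 + m) * (qfact q (0 + m) / (qfact q 0 * qfact q m)) * (Wp m (m.+1 - 0) / qfact q (m.+1 - 0))).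
Proof.
rewrite /Yf subn0 add0n subnn.
have e1 : (2 * m.+1 - m.+1 = m.+1)%N by lia.
have e2 : (2 * m.+1 - 1 - m.+1 = m)%N by lia.
rewrite e1 e2.
have hW := @Wp_shift m m.+1 (leqnn _); rewrite subnn expr0 -/two in hW.
have hWm : Wp m m.+1 = two * Wp m.+1 m.+1 / (1 + q ^+ m.+1).
  by rewrite -hW; field; exact: onepq_neq0.
rewrite hWm qfact0 !qfactS.
have n3 := qfact_neq0 m; have n5 := @qint_neq0 m.+1 (ltn0Sn _).
have n6 := onepq_neq0 m.+1; have n7 := two_neq0.
field; by rewrite n3 n5 n6 n7.
Qed.

Lemma Ysum m : \sum_(s < m.+2) Yf m.+1 s = 0.
Proof.
transitivity ((1 + q ^+ m.+1) * qfact q m.+1 / two * (Qs pp m m.+1 + Qs pp m.+1 m)); last first.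
  by rewrite Q_anti mulr0.
rewrite !Qs_eq (reindex_inj rev_ord_inj) /= big_ord_recl [X in _ = _ * (_ + X)]big_ord_recl /=.
rewrite (_ : (m.+2 - 1 = m.+1)%N) // Yterm0 [in RHS]mulrDr [in RHS]mulrDr [in RHS]addrCA.
congr (_ + _).
rewrite -mulrDr -big_split mulr_sumr; apply: eq_bigr => a _.
rewrite /bump /= add1n !subSS Yterm //; by rewrite -ltnS.
Qed.

Lemma pp_even j : (0 < j)%N -> pp (2 * j) = 0.
Proof.
move=> hj; rewrite /pp /delta TT_odd; last by rewrite /= mul2n odd_double.
have -> : ((2 * j)%N == 0%N) = false by apply/negbTE; rewrite muln_eq0 /= -lt0n.
by rewrite subrr mul0r.
Qed.

Lemma term_eq n k : (1 <= n)%N -> (2 * k <= n)%N ->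
  q ^+ 'C(2 * k, 2) * qbinom q n (2 * k) * (-1) ^+ k
     * (qpoch (- q ^+ (n - 2 * k + 1)) q (2 * k)
        / qpoch (- q ^+ (2 * n - 2 * k)) q (2 * k))
     * qGenocchi q (2 * n - 2 * k)
  = two * (-1) ^+ n * qfact q n / qpoch (- q) q (2 * n - 1) * Yf n (2 * k).
Proof.
move=> hn hk.
set M := (2 * n - 2 * k - 1)%N.
have hM1 : (2 * n - 2 * k = M.+1)%N by rewrite /M; lia.
have hM2 : (2 * n - 1 - 2 * k = M)%N by rewrite /M; lia.
have hM3 : (2 * n - 1 = M + 2 * k)%N by rewrite /M; lia.
have hh : ((2 * n - 2 * k)./2 = n - k)%N by rewrite -mulnBr mul2n doubleK.
have hM0 : (M == 0%N) = false by apply/negbTE; rewrite /M; lia.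
rewrite /Yf /qGenocchi /qbinom hh hM1 hM2 hM3 /=.
have hT : qgen_series q M.+1 = - (two * pp M).
  rewrite /pp /delta hM0 /TT /= sub0r mulrC divfK ?opprK //; exact: two_neq0.
rewrite hT -(@W1 n (2 * k) hk) -(W2 M (2 * k)).
rewrite (_ : (-1) ^+ n = (-1) ^+ k * (-1) ^+ (n - k).-1 * (-1) :> R); last first.
  by rewrite -exprD -exprSr; congr (_ ^+ _); lia.
have n1 := qfact_neq0 (2 * k); have n2 := qfact_neq0 (n - 2 * k).
have n3 := qpochN_neq0 M.+1 (2 * k); have n4 := qpochN_neq0 1 M.
rewrite expr1 in n4.
have n5 := two_neq0.
field; by rewrite ?n1 ?n2 ?n3 ?n4 ?n5.
Qed.

Lemma sum_parity (h : nat -> R) j :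
  \sum_(s < (2 * j).+1) h s = \sum_(k < j.+1) h (2 * k)%N + \sum_(k < j) h (2 * k).+1 /\
  \sum_(s < (2 * j).+2) h s = \sum_(k < j.+1) h (2 * k)%N + \sum_(k < j.+1) h (2 * k).+1.
Proof.
elim: j => [|j [IH1 IH2]].
  by rewrite !big_ord_recr !big_ord0 /= !add0r addr0.
have e : (2 * j.+1 = (2 * j).+2)%N by rewrite mulnS.
split.
  by rewrite e big_ord_recr IH2 /= [in RHS]big_ord_recr /= e addrAC.
by rewrite e big_ord_recr /= big_ord_recr IH2 /= [in RHS]big_ord_recr /= [X in _ = _ + X]big_ord_recr /= e; rewrite !addrA; congr (_ + _); rewrite addrAC.
Qed.

Lemma Yf_zero n s t : (2 * n - 1 - s = 2 * t)%N -> (0 < t)%N -> Yf n s = 0.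
Proof. by move=> h ht; rewrite /Yf h pp_even // mulr0 mul0r. Qed.

Lemma main_sec n : (1 <= n)%N ->
  \sum_(k < (n./2).+1)
     q ^+ 'C(2 * k, 2) * qbinom q n (2 * k) * (-1) ^+ k
     * (qpoch (- q ^+ (n - 2 * k + 1)) q (2 * k)
        / qpoch (- q ^+ (2 * n - 2 * k)) q (2 * k))
     * qGenocchi q (2 * n - 2 * k)
  = (n == 1)%N%:R.
Proof.
move=> hn.
have hj := odd_double_half n.
rewrite (eq_bigr (fun k : 'I_(n./2).+1 => two * (-1) ^+ n * qfact q n / qpoch (- q) q (2 * n - 1) * Yf n (2 * k))); last first.
  move=> k _; rewrite term_eq //; have := ltn_ord k; rewrite ltnS => hk.
  move: hj; rewrite -mul2n; lia.
rewrite -mulr_sumr.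
move: (n./2) hj => j hj.
case ho: (odd n) hj => /= hj; rewrite -mul2n in hj.
- rewrite ?add1n in hj; subst n.
  have [_ hs] := sum_parity (Yf (2 * j).+1) j.
  rewrite Ysum in hs.
  case: j hs hn ho => [|j] hs _ _.
    rewrite /= !big_ord1 /= ?muln0 in hs *.
    have hE : Yf 1 0 = - Yf 1 1 by apply/eqP; rewrite -addr_eq0 eq_sym hs.
    have e1 : qfact q 1 = 1 by rewrite qfactS qfact0 mul1r /qint big_ord1 expr0.
    have e2 : Wp 1 1 = q + 1 by rewrite /Wp big_ord1 expr1 expr0.
    have e3 : qpoch (- q) q 1 = 1 + q by rewrite /qpoch big_ord1 expr0 mulr1 opprK.
    have e4 : pp 0 = 1 / two by rewrite /pp /delta /= TT_odd // subr0.
    rewrite hE /Yf (_ : (2 * 1 - 1 - 1 = 0)%N) // (_ : (2 * 1 - 1 = 1)%N) //.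
    rewrite e1 e2 e3 e4 qfact0 expr1.
    have n1 := onepq_neq0 1; rewrite expr1 in n1.
    have n2 := two_neq0.
    field; by rewrite ?n1 ?n2.
  have hO : \sum_(k < j.+2) Yf (2 * j.+1).+1 (2 * k).+1 = 0.
    apply: big1 => k _; apply: (@Yf_zero _ _ (2 * j.+1 - k)%N).
      have := ltn_ord k; lia.
    have := ltn_ord k; lia.
  rewrite hO addr0 in hs.
  have -> : ((2 * j.+1).+1 == 1)%N = false by rewrite eqSS muln_eq0.
  by rewrite -hs mulr0.
- rewrite ?add0n in hj; subst n.
  case: j hn ho => [//|j] _ _.
  have [hs _] := sum_parity (Yf (2 * j.+1)) j.+1.
  have e : (2 * j.+1 = (2 * j).+1.+1)%N by rewrite mulnS.
  have hY := Ysum (2 * j).+1; rewrite -e in hY.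
  rewrite hY in hs.
  have hO : \sum_(k < j.+1) Yf (2 * j.+1) (2 * k).+1 = 0.
    apply: big1 => k _; apply: (@Yf_zero _ _ (2 * j.+1 - k - 1)%N).
      have := ltn_ord k; lia.
    have := ltn_ord k; lia.
  rewrite hO addr0 in hs.
  have -> : (2 * j.+1 == 1)%N = false by rewrite e.
  by rewrite -hs mulr0.
Qed.

End S.

Theorem theorem3p5 (R : realType) (q : R) (n : nat) :
  q != -1 -> (1 <= n)%N ->
  \sum_(k < (n./2).+1)
     q ^+ 'C(2 * k, 2) * qbinom q n (2 * k) * (-1) ^+ k
     * (qpoch (- q ^+ (n - 2 * k + 1)) q (2 * k)
        / qpoch (- q ^+ (2 * n - 2 * k)) q (2 * k))
     * qGenocchi q (2 * n - 2 * k)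
  = (n == 1)%N%:R.
Proof.
move=> hq hn; exact: (@main_sec R q hq n hn).
Qed.
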